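(* Let $R$ be a countable ring, let $B$ be a countable index set, and let $(M_\alpha)_{\alpha\in B}$ be any family of unitary left $R$-modules. Then the left $R$-module $$\prod_{\alpha\in B}M_\alpha\Big/\bigoplus_{\alpha\in B}M_\alpha$$ is algebraically compact.
   Context: All modules are unitary left $R$-modules. For a cardinal $\kappa$, a module $M$ is $\kappa$-compact if every system of at most $\kappa$ linear equations $\sum_{j\in J} r_{ij}x_j = m_i$ ($i\in I$, $r_{ij}\in R$, for each $i$ almost all $r_{ij}=0$, $m_i\in M$, $|I|,|J|\le\kappa$) has a solution in $M$ whenever every finite subsystem has a solution in $M$. $M$ is algebraically compact if it is $\kappa$-compact for every cardinal $\kappa$ (equivalently, $M$ is pure injective). *)

(* Defs.v *)
From HB Require Import structures.
From mathcomp Require Import all_boot all_algebra generic_quotient.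
From mathcomp Require Import boolp.
From Stdlib Require List.
Set Implicit Arguments. Unset Strict Implicit. Unset Printing Implicit Defensive.
Import GRing.Theory.
Local Open Scope ring_scope.
Local Open Scope quotient_scope.

Section ProductModule.
Variables (R : pzRingType) (B : eqType) (M : B -> lmodType R).

Definition prodmod : Type := forall b : B, M b.

HB.instance Definition _ := Choice.copy prodmod (forall b : B, M b).

Definition pm_zero : prodmod := fun b => 0.
Definition pm_add (f g : prodmod) : prodmod := fun b => f b + g b.
Definition pm_opp (f : prodmod) : prodmod := fun b => - f b.
Definition pm_scale (a : R) (f : prodmod) : prodmod := fun b => a *: f b.

Let fext (f g : prodmod) : (forall b, f b = g b) -> f = g :=
  @functional_extensionality_dep _ _ f g.

Lemma pm_addA : associative pm_add.
Proof. by move=> f g h; apply: fext => b; rewrite /pm_add addrA. Qed.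
Lemma pm_addC : commutative pm_add.
Proof. by move=> f g; apply: fext => b; rewrite /pm_add addrC. Qed.
Lemma pm_add0 : left_id pm_zero pm_add.
Proof. by move=> f; apply: fext => b; rewrite /pm_add /pm_zero add0r. Qed.
Lemma pm_addN : left_inverse pm_zero pm_opp pm_add.
Proof. by move=> f; apply: fext => b; rewrite /pm_add /pm_opp addNr. Qed.

HB.instance Definition _ :=
  GRing.isZmodule.Build prodmod pm_addA pm_addC pm_add0 pm_addN.

Lemma pm_scaleA a c (f : prodmod) :
  pm_scale a (pm_scale c f) = pm_scale (a * c) f.
Proof. by apply: fext => b; rewrite /pm_scale scalerA. Qed.
Lemma pm_scale1 : left_id 1 pm_scale.
Proof. by move=> f; apply: fext => b; rewrite /pm_scale scale1r. Qed.
Lemma pm_scaleDr : right_distributive pm_scale +%R.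
Proof. by move=> a f g; apply: fext => b; rewrite /pm_scale /= /pm_add scalerDr. Qed.
Lemma pm_scaleDl (f : prodmod) : {morph pm_scale^~ f : a c / a + c}.
Proof. by move=> a c; apply: fext => b; rewrite /pm_scale /= /pm_add scalerDl. Qed.

HB.instance Definition _ :=
  GRing.Zmodule_isLmodule.Build R prodmod pm_scaleA pm_scale1 pm_scaleDr pm_scaleDl.

Lemma pmE0 b : (0 : prodmod) b = 0. Proof. by []. Qed.
Lemma pmED (f g : prodmod) b : (f + g) b = f b + g b. Proof. by []. Qed.
Lemma pmEN (f : prodmod) b : (- f) b = - f b. Proof. by []. Qed.
Lemma pmEZ a (f : prodmod) b : (a *: f) b = a *: f b. Proof. by []. Qed.

Definition in_dsum (f : prodmod) : Prop :=
  exists s : seq B, forall b, b \notin s -> f b = 0.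

Lemma in_dsum0 : in_dsum 0.
Proof. by exists [::]. Qed.

Lemma in_dsumB f g : in_dsum f -> in_dsum g -> in_dsum (f - g).
Proof.
move=> [s Hs] [t Ht]; exists (s ++ t) => b; rewrite mem_cat negb_or => /andP[bs bt].
by rewrite pmED pmEN Hs // Ht // subr0.
Qed.

Lemma in_dsumZ a f : in_dsum f -> in_dsum (a *: f).
Proof. by move=> [s Hs]; exists s => b bs; rewrite pmEZ Hs // scaler0. Qed.

Lemma in_dsumN f : in_dsum f -> in_dsum (- f).
Proof. by move=> Hf; rewrite -sub0r; apply: in_dsumB => //; apply: in_dsum0. Qed.

Lemma in_dsumD f g : in_dsum f -> in_dsum g -> in_dsum (f + g).
Proof. by move=> Hf Hg; rewrite -[g]opprK; apply: in_dsumB => //; apply: in_dsumN. Qed.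

Definition dsum_rel (f g : prodmod) : bool := `[< in_dsum (f - g) >].

Lemma dsum_relP f g : reflect (in_dsum (f - g)) (dsum_rel f g).
Proof. exact: asboolP. Qed.

Lemma dsum_rel_refl : reflexive dsum_rel.
Proof. by move=> f; apply/dsum_relP; rewrite subrr; apply: in_dsum0. Qed.
Lemma dsum_rel_sym : symmetric dsum_rel.
Proof.
move=> f g; apply/dsum_relP/dsum_relP => /in_dsumN; by rewrite opprB.
Qed.
Lemma dsum_rel_trans : transitive dsum_rel.
Proof.
move=> g f h /dsum_relP H1 /dsum_relP H2; apply/dsum_relP.
by have := in_dsumD H1 H2; rewrite addrA subrK.
Qed.

Canonical dsum_equiv := EquivRel dsum_rel dsum_rel_refl dsum_rel_sym dsum_rel_trans.

Definition quotmod : Type := {eq_quot dsum_rel}.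
HB.instance Definition _ := Choice.on quotmod.
HB.instance Definition _ := EqQuotient.on quotmod.

Local Notation pi := (\pi_quotmod).

Lemma quot_eqP (f g : prodmod) : reflect (pi f = pi g) (dsum_rel f g).
Proof. exact: eqmodP. Qed.

Lemma repr_rel (f : prodmod) : in_dsum (repr (pi f) - f).
Proof. by apply/dsum_relP/quot_eqP; rewrite reprK. Qed.

Definition qm_zero : quotmod := pi 0.
Definition qm_add : quotmod -> quotmod -> quotmod :=
  locked (fun x y : quotmod => pi (repr x + repr y)).
Definition qm_opp : quotmod -> quotmod := locked (fun x : quotmod => pi (- repr x)).
Definition qm_scale : R -> quotmod -> quotmod :=
  locked (fun (a : R) (x : quotmod) => pi (a *: repr x)).

Lemma qm_addE f g : qm_add (pi f) (pi g) = pi (f + g).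
Proof.
rewrite /qm_add -lock.
apply/quot_eqP/dsum_relP; rewrite opprD addrACA.
by apply: in_dsumD; apply: repr_rel.
Qed.
Lemma qm_oppE f : qm_opp (pi f) = pi (- f).
Proof.
rewrite /qm_opp -lock.
apply/quot_eqP/dsum_relP; rewrite -opprD; apply: in_dsumN.
exact: repr_rel.
Qed.
Lemma qm_scaleE a f : qm_scale a (pi f) = pi (a *: f).
Proof. rewrite /qm_scale -lock. apply/quot_eqP/dsum_relP; rewrite -scalerBr; apply: in_dsumZ; exact: repr_rel. Qed.

Lemma qm_addA : associative qm_add.
Proof.
move=> x y z; elim/quotW: x => f; elim/quotW: y => g; elim/quotW: z => h.
by rewrite !qm_addE addrA.
Qed.
Lemma qm_addC : commutative qm_add.
Proof. by move=> x y; elim/quotW: x => f; elim/quotW: y => g; rewrite !qm_addE addrC. Qed.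
Lemma qm_add0 : left_id qm_zero qm_add.
Proof. by move=> x; elim/quotW: x => f; rewrite /qm_zero qm_addE add0r. Qed.
Lemma qm_addN : left_inverse qm_zero qm_opp qm_add.
Proof. by move=> x; elim/quotW: x => f; rewrite qm_oppE qm_addE addNr. Qed.

HB.instance Definition _ :=
  GRing.isZmodule.Build quotmod qm_addA qm_addC qm_add0 qm_addN.

Lemma qm_scaleA a c (x : quotmod) :
  qm_scale a (qm_scale c x) = qm_scale (a * c) x.
Proof. by elim/quotW: x => f; rewrite !qm_scaleE scalerA. Qed.
Lemma qm_scale1 : left_id 1 qm_scale.
Proof. by move=> x; elim/quotW: x => f; rewrite qm_scaleE scale1r. Qed.
Lemma qm_scaleDr : right_distributive qm_scale +%R.
Proof.
move=> a x y.
change (qm_scale a (qm_add x y) = qm_add (qm_scale a x) (qm_scale a y)).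
elim/quotW: x => f; elim/quotW: y => g.
by rewrite /= !(qm_addE, qm_scaleE) scalerDr.
Qed.
Lemma qm_scaleDl (x : quotmod) : {morph qm_scale^~ x : a c / a + c}.
Proof.
move=> a c; change (qm_scale (a + c) x = qm_add (qm_scale a x) (qm_scale c x)).
by elim/quotW: x => f; rewrite !(qm_addE, qm_scaleE) scalerDl.
Qed.

HB.instance Definition _ :=
  GRing.Zmodule_isLmodule.Build R quotmod qm_scaleA qm_scale1 qm_scaleDr qm_scaleDl.

End ProductModule.

(* A system of linear equations over a module N with variables indexed by J *)
(* and equations indexed by I: equation i is                                *)
(*     \sum_(p <- eqs i) p.1 *: x_(p.2) = rhs i,                             *)
(* i.e. each equation involves only finitely many variables (a finite list  *)
(* of (coefficient, variable) pairs).                                       *)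
Definition solves (R : pzRingType) (N : lmodType R) (I J : Type)
    (eqs : I -> seq (R * J)) (rhs : I -> N) (x : J -> N) (i : I) : Prop :=
  \sum_(p <- eqs i) p.1 *: x p.2 = rhs i.

(* N is kappa-compact: systems with |I|, |J| <= kappa that are finitely       *)
(* solvable are solvable.  Cardinals are encoded by index types.             *)
Definition kappa_compact (R : pzRingType) (N : lmodType R) (K : Type) : Prop :=
  forall (I J : Type) (fI : I -> K) (fJ : J -> K),
    injective fI -> injective fJ ->
  forall (eqs : I -> seq (R * J)) (rhs : I -> N),
    (forall F : seq I, exists x : J -> N,
        forall i, List.In i F -> solves eqs rhs x i) ->
    exists x : J -> N, forall i, solves eqs rhs x i.

Definition alg_compact (R : pzRingType) (N : lmodType R) : Prop :=
  forall K : Type, kappa_compact N K.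

(* Main.v *)
Require Import Defs.
From HB Require Import structures.
From mathcomp Require Import all_boot all_algebra generic_quotient.
From mathcomp Require Import boolp.
From mathcomp Require classical_sets.
From Stdlib Require List.
Set Implicit Arguments. Unset Strict Implicit. Unset Printing Implicit Defensive.
Import GRing.Theory.
Local Open Scope ring_scope.
Local Open Scope quotient_scope.

Lemma In_cat (T : Type) (x : T) (s t : seq T) :
  List.In x s \/ List.In x t -> List.In x (s ++ t).
Proof.
elim: s => [|y s IH] /=; first by case.
case=> [[->|H]|H]; [by left|right; apply: IH; by left|right; apply: IH; by right].
Qed.

Lemma In_map (T U : Type) (f : T -> U) (x : T) (s : seq T) :
  List.In x s -> List.In (f x) (map f s).
Proof. elim: s => [|y s IH] //= [->|H]; [by left|right; exact: IH]. Qed.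

Lemma In_map_inv (T U : Type) (f : T -> U) (e : U) (s : seq T) :
  List.In e (map f s) -> exists x, f x = e /\ List.In x s.
Proof.
elim: s => [|y s IH] //= [<-|/IH [x [H1 H2]]]; first by exists y; split; [|left].
by exists x; split; [|right].
Qed.

Lemma has_In (T : Type) (x : T) (s : seq T) :
  List.In x s -> has (fun w => `[< w = x >]) s.
Proof.
elim: s => [|y s IH] //= [->|H]; first by rewrite asboolT.
by rewrite IH // orbT.
Qed.

Lemma big_In (V : zmodType) (T : Type) (s : seq T) (F G : T -> V) :
  (forall p, List.In p s -> F p = G p) -> \sum_(p <- s) F p = \sum_(p <- s) G p.
Proof.
elim: s => [|y s IH] H; first by rewrite !big_nil.
rewrite !big_cons H /=; last by left.
by rewrite IH // => p Hp; apply: H; right.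
Qed.

Fixpoint lastp (p : nat -> bool) (n : nat) : nat :=
  if n is n'.+1 then (if p n' then n' else lastp p n') else 0.

Lemma lastpP (p : nat -> bool) n k : (k < n)%N -> p k -> p (lastp p n) /\ (k <= lastp p n)%N.
Proof.
elim: n => [|n IH] //= kn pk.
case pn: (p n); first by split => //; rewrite -ltnS.
apply: IH => //; rewrite ltn_neqAle -ltnS kn andbT.
by apply/eqP => e; move: pn; rewrite -e pk.
Qed.

Section Quot.
Variables (R : pzRingType) (B : countType) (M : B -> lmodType R).
Local Notation P := (prodmod M).
Local Notation Q := (quotmod M).
Local Notation pi := (\pi_Q).

Lemma piD (f g : P) : pi (f + g) = pi f + pi g.
Proof. by rewrite -qm_addE. Qed.
Lemma piZ a (f : P) : pi (a *: f) = a *: pi f.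
Proof. by rewrite -qm_scaleE. Qed.
Lemma pi_sum (T : Type) (s : seq T) (F : T -> P) :
  pi (\sum_(x <- s) F x) = \sum_(x <- s) pi (F x).
Proof.
elim: s => [|y s IH]; first by rewrite !big_nil.
by rewrite !big_cons piD IH.
Qed.
Lemma eval_sum (T : Type) (s : seq T) (F : T -> P) b :
  (\sum_(x <- s) F x) b = \sum_(x <- s) F x b.
Proof.
elim: s => [|y s IH]; first by rewrite !big_nil.
by rewrite !big_cons pmED IH.
Qed.
Lemma pi_eq (f g : P) : in_dsum (f - g) -> pi f = pi g.
Proof. by move=> H; apply/quot_eqP/dsum_relP. Qed.
Lemma pi_eq_inv (f g : P) : pi f = pi g -> exists s : seq B, forall b, b \notin s -> f b = g b.
Proof.
move=> /quot_eqP /dsum_relP [s Hs]; exists s => b /Hs.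
by rewrite pmED pmEN => /eqP; rewrite subr_eq0 => /eqP.
Qed.

Lemma fin_union (T : Type) (Pr : T -> B -> Prop) (L : seq T) :
  (forall t, List.In t L -> exists s : seq B, forall b, b \notin s -> Pr t b) ->
  exists s : seq B, forall b, b \notin s -> forall t, List.In t L -> Pr t b.
Proof.
elim: L => [|t L IH] H; first by exists [::].
have [s1 H1] := H t (or_introl erefl).
have [s2 H2] : exists s : seq B, forall b, b \notin s -> forall t, List.In t L -> Pr t b.
  by apply: IH => u Hu; apply: H; right.
exists (s1 ++ s2) => b; rewrite mem_cat negb_or => /andP [b1 b2] u /= [<-|Hu].
  exact: H1.
exact: H2.
Qed.

End Quot.
Section Diag.
Variables (R : pzRingType) (B : countType) (M : B -> lmodType R).
Local Notation P := (prodmod M).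
Local Notation Q := (quotmod M).
Local Notation pi := (\pi_Q).
Variables (I J : Type) (eqs : I -> seq (R * J)) (rhs : I -> Q).
Local Notation sol := (solves eqs rhs).

Lemma diagonal (G : nat -> seq I) (y : nat -> J -> Q) (D : J -> Prop) (a : J -> Q) :
  (forall m v, D v -> y m v = a v) ->
  (forall m k i, (k <= m)%N -> List.In i (G k) -> sol (y m) i) ->
  exists z, (forall v, D v -> z v = a v) /\ forall k i, List.In i (G k) -> sol z i.
Proof.
move=> yD ysol.
pose yt m v : P := if `[< D v >] then repr (a v) else repr (y m v).
have ytE m v : pi (yt m v) = y m v.
  rewrite /yt; case: (asboolP (D v)) => Dv; last exact: reprK.
  by rewrite reprK yD.
pose good m b := forall k i, (k <= m)%N -> List.In i (G k) ->
  \sum_(p <- eqs i) p.1 *: yt m p.2 b = repr (rhs i) b.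
have fin m : exists s : seq B, forall b, b \notin s -> good m b.
  suff H n : exists s : seq B, forall b, b \notin s -> forall k i, (k < n)%N ->
      (k <= m)%N -> List.In i (G k) ->
      \sum_(p <- eqs i) p.1 *: yt m p.2 b = repr (rhs i) b.
    have [s Hs] := H m.+1; exists s => b bs k i km; exact: Hs.
  elim: n => [|n [s1 H1]]; first by exists [::].
  have [s2 H2] : exists s : seq B, forall b, b \notin s -> forall i, List.In i (G n) ->
      (n <= m)%N -> \sum_(p <- eqs i) p.1 *: yt m p.2 b = repr (rhs i) b.
    apply: (@fin_union B I (fun i b => (n <= m)%N ->
      \sum_(p <- eqs i) p.1 *: yt m p.2 b = repr (rhs i) b) (G n)) => i Hi.
       case: (boolP (n <= m)%N) => nm; last by exists [::].
      have : pi (\sum_(p <- eqs i) p.1 *: yt m p.2) = pi (repr (rhs i)).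
        rewrite pi_sum reprK -(ysol m n i nm Hi); apply: eq_bigr => p _.
        by rewrite piZ ytE.
      move=> /pi_eq_inv [s Hs]; exists s => b /Hs <- _.
      by rewrite eval_sum.
  exists (s1 ++ s2) => b; rewrite mem_cat negb_or => /andP [b1 b2] k i.
  rewrite ltnS leq_eqVlt => /orP [/eqP -> | kn] km Hi.
    exact: H2 b b2 i Hi km.
  exact: H1 b b1 k i kn km Hi.
pose mb b := lastp (fun m => `[< good m b >]) (pickle b).+1.
pose w v : P := fun b => yt (mb b) v b.
exists (fun v => pi (w v)); split.
  move=> v Dv; have -> : w v = repr (a v).
    by apply: functional_extensionality_dep => b; rewrite /w /yt asboolT.
  exact: reprK.
move=> k i Hi; rewrite /solves.
have -> : \sum_(p <- eqs i) p.1 *: pi (w p.2) = pi (\sum_(p <- eqs i) p.1 *: w p.2).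
  by rewrite pi_sum; apply: eq_bigr => p _; rewrite piZ.
rewrite -[rhs i]reprK; apply: pi_eq.
have [s Hs] := fin k.
exists (s ++ pmap unpickle (iota 0 k)) => b; rewrite mem_cat negb_or => /andP [bs bk].
have kb : (k < (pickle b).+1)%N.
  rewrite ltnS leqNgt; apply: contra bk => bk.
  by rewrite mem_pmap; apply/mapP; exists (pickle b); rewrite ?pickleK // mem_iota.
have [gm km] := @lastpP (fun m => `[< good m b >]) _ _ kb (asboolT (Hs b bs)).
move/asboolP: gm => gm.
rewrite pmED pmEN eval_sum.
have -> : \sum_(p <- eqs i) (p.1 *: w p.2) b = \sum_(p <- eqs i) p.1 *: yt (mb b) p.2 b.
  by apply: eq_bigr => p _; rewrite pmEZ.
by rewrite (gm k i km Hi) subrr.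
Qed.

End Diag.
Section Ext.
Variables (R : countPzRingType) (B : countType) (M : B -> lmodType R).
Local Notation P := (prodmod M).
Local Notation Q := (quotmod M).
Local Notation pi := (\pi_Q).
Variables (I J : Type) (eqs : I -> seq (R * J)) (rhs : I -> Q).
Local Notation sol := (solves eqs rhs).

Definition valid (D : J -> Prop) (a : J -> Q) :=
  forall F : seq I, exists y : J -> Q,
    (forall v, D v -> y v = a v) /\ forall i, List.In i F -> sol y i.

Fixpoint varsF (F : seq I) : seq J :=
  if F is i :: F' then map snd (eqs i) ++ varsF F' else [::].

Lemma In_vars F i p : List.In i F -> List.In p (eqs i) -> List.In p.2 (varsF F).
Proof.
elim: F => [|i' F IH] //= [<-|H] Hp; apply: In_cat; first by left; exact: In_map.
by right; exact: IH.
Qed.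

Variables (D : J -> Prop) (a : J -> Q) (j : J).
Hypotheses (Dval : valid D a) (nDj : ~ D j).

Definition TT F c := exists y : J -> Q,
  (forall v, D v -> y v = a v) /\ y j = c /\ forall i, List.In i F -> sol y i.
Definition HH F c := exists y : J -> Q,
  (forall v, D v -> y v = 0) /\ y j = c /\
  forall i, List.In i F -> \sum_(p <- eqs i) p.1 *: y p.2 = 0.

Lemma TH F c h : TT F c -> HH F h -> TT F (c + h).
Proof.
move=> [y [y1 [y2 y3]]] [z [z1 [z2 z3]]].
exists (fun v => y v + z v); split; [|split].
- by move=> v Dv; rewrite y1 // z1 // addr0.
- by rewrite y2 z2.
move=> i Hi; rewrite /solves.
under eq_bigr => p _ do rewrite scalerDr.
by rewrite big_split /= (z3 i Hi) addr0; exact: y3.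
Qed.

Lemma TTH F c c' : TT F c -> TT F c' -> HH F (c - c').
Proof.
move=> [y [y1 [y2 y3]]] [z [z1 [z2 z3]]].
exists (fun v => y v - z v); split; [|split].
- by move=> v Dv; rewrite y1 // z1 // subrr.
- by rewrite y2 z2.
move=> i Hi.
under eq_bigr => p _ do rewrite scalerBr.
by rewrite sumrB (y3 i Hi) (z3 i Hi) subrr.
Qed.

Definition vs F := j :: varsF F.
Definition tag F (v : J) := find (fun w => `[< w = v >]) (vs F).
Definition code F : seq (seq (R * nat)) :=
  map (fun i => map (fun p => (if `[< D p.2 >] then 0 else p.1, tag F p.2)) (eqs i)) F.

Definition Hc (k : seq (seq (R * nat))) (c : Q) := exists z : nat -> Q,
  z 0%N = c /\ forall e, List.In e k -> \sum_(p <- e) p.1 *: z p.2 = 0.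

Lemma HH_Hc F c : HH F c <-> Hc (code F) c.
Proof.
split.
  move=> [y [y1 [y2 y3]]].
  exists (fun n => y (nth j (vs F) n)); split; first by rewrite /= y2.
  move=> e He; have [i [ei Hi]] := In_map_inv He; rewrite -ei big_map.
  rewrite -[RHS](y3 i Hi).
  apply: big_In => p Hp /=.
  case: (asboolP (D p.2)) => Dp; first by rewrite (y1 p.2 Dp) scaler0 scale0r.
  congr (_ *: y _).
  have Hh := has_In (In_vars Hi Hp : List.In p.2 (varsF F)).
  have : has (fun w => `[< w = p.2 >]) (vs F) by rewrite /= Hh orbT.
  by move/(nth_find j)/asboolP.
move=> [z [z0 z1]].
exists (fun v => if `[< D v >] then 0 else z (tag F v)); split; [|split].
- by move=> v Dv; rewrite asboolT.
- by rewrite asboolF // /tag /= asboolT.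
move=> i Hi.
have := z1 _ (In_map (fun i => map (fun p => (if `[< D p.2 >] then 0 else p.1, tag F p.2)) (eqs i)) Hi).
rewrite big_map => H; rewrite -[RHS]H; apply: eq_bigr => p _ /=.
by case: (asboolP (D p.2)) => _; rewrite ?scale0r ?scaler0.
Qed.

Lemma TT_sub F G c : (forall i, List.In i G -> List.In i F) -> TT F c -> TT G c.
Proof. move=> FG [y [y1 [y2 y3]]]; exists y; do 2!split => //; move=> i /FG; exact: y3. Qed.

Lemma code_TT F G c : code F = code G -> TT F c -> TT G c.
Proof.
move=> cFG Tc.
have [y [y1 y2]] := Dval (List.app F G).
have TFG : TT (List.app F G) (y j) by exists y.
have TF : TT F (y j) by apply: TT_sub TFG => i Hi; apply: List.in_or_app; left.
have TG : TT G (y j) by apply: TT_sub TFG => i Hi; apply: List.in_or_app; right.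
have /HH_Hc : HH F (c - y j) by exact: TTH.
rewrite cFG => /HH_Hc H.
by have := TH TG H; rewrite addrC subrK.
Qed.

Lemma extend : exists c, valid (fun v => D v \/ v = j)
  (fun v => if `[< v = j >] then c else a v).
Proof.
have hF : forall n : nat, exists F : seq I,
    (exists G, pickle (code G) = n) -> pickle (code F) = n.
  move=> n; case: (pselect (exists G, pickle (code G) = n)) => [[G HG]|nG].
    by exists G.
  by exists [::] => H; exfalso; exact: nG.
have [Fn HFn] := choice hF.
pose cum := (fix cum (n : nat) : seq I :=
  if n is n'.+1 then List.app (Fn n) (cum n') else Fn 0%N).
have cumP : forall m k i, (k <= m)%N -> List.In i (Fn k) -> List.In i (cum m).
  elim=> [|m IH] k i; first by rewrite leqn0 => /eqP ->.
  rewrite leq_eqVlt => /orP [/eqP -> | km] Hi /=; apply: List.in_or_app.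
    by left.
  by right; exact: IH km Hi.
have hy : forall m, exists y : J -> Q, (forall v, D v -> y v = a v) /\ forall i, List.In i (cum m) -> sol y i := fun m => Dval (cum m).
have [y Hy] := choice hy.
have [z [zD zs]] : exists z, (forall v, D v -> z v = a v) /\ forall k i, List.In i (Fn k) -> sol z i.
  apply: (@diagonal _ _ M I J eqs rhs Fn y D a).
  - by move=> m v Dv; exact: (Hy m).1 v Dv.
  - by move=> m k i km Hi; apply: (Hy m).2; exact: cumP km Hi.
exists (z j) => F.
have TF : TT F (z j).
  have cF : code (Fn (pickle (code F))) = code F.
    by apply: (pcan_inj (@pickleK _)); apply: HFn; exists F.
  apply: (code_TT cF).
  by exists z; do 2!split => //; exact: zs.
case: TF => y' [y1 [y2 y3]]; exists y'; split => // v [Dv|->].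
  rewrite asboolF ?y1 // => e; apply: nDj; by rewrite -e.
by rewrite asboolT.
Qed.

End Ext.

Theorem proposition1 (R : countPzRingType) (B : countType) (M : B -> lmodType R) :
  alg_compact (quotmod M).
Proof.
move=> K I J fI fJ _ _ eqs rhs Hfin.
set Q := quotmod M.
have base : valid eqs rhs (fun _ => False) (fun _ => 0 : Q).
  by move=> F; have [x Hx] := Hfin F; exists x; split.
pose Tp := {p : (J -> Prop) * (J -> Q) | valid eqs rhs p.1 p.2}.
pose t0 : Tp := exist _ (fun _ => False, fun _ => 0 : Q) base.
pose Rl (s t : Tp) : bool :=
  `[< forall v, (sval s).1 v -> (sval t).1 v /\ (sval t).2 v = (sval s).2 v >].
have [t tmax] : exists t, classical_sets.premaximal Rl t.
  apply: (@classical_sets.ZL_preorder Tp t0 Rl).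
  - by move=> s; apply/asboolP.
  - move=> r s u /asboolP H1 /asboolP H2; apply/asboolP => v /H1 [/H2 [H3 H4] H5].
    by split => //; rewrite H4.
  move=> A Atot.
  pose Ds v := exists s, A s /\ (sval s).1 v.
  have hq : forall v, exists q : Q, forall s, A s -> (sval s).1 v -> (sval s).2 v = q.
    move=> v; case: (pselect (Ds v)) => [[s [As Dsv]]|nD].
      exists ((sval s).2 v) => s' As' Ds'v.
      case: (Atot s s' As As') => /asboolP H.
        by have [_ ->] := H v Dsv.
      by have [_ ->] := H v Ds'v.
    by exists 0 => s As Dsv; exfalso; apply: nD; exists s.
  have [as_ Has] := choice hq.
  have Vu : valid eqs rhs Ds as_.
    move=> F; case: (pselect (exists s, A s)) => [[s0 As0]|nA].
      have claim : forall L : seq J, exists s, A s /\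
          forall v, List.In v L -> Ds v -> (sval s).1 v.
        elim=> [|v L [s [As Hs]]]; first by exists s0.
        case: (pselect (Ds v)) => [[s' [As' Ds'v]]|nD].
          case: (Atot s s' As As') => /asboolP H.
            exists s'; split => // w /= [e|Hw]; first by rewrite -e.
            by move=> /(Hs w Hw) /H [].
          exists s; split => // w /= [e|Hw]; last exact: Hs.
          by move=> _; rewrite -e; have [] := H v Ds'v.
        exists s; split => // w /= [e|Hw]; last exact: Hs.
        by rewrite -e => /nD.
      have [s [As Hs]] := claim (varsF eqs F).
      have [y [y1 y2]] := svalP s F.
      exists (fun v => if `[< Ds v >] then as_ v else y v); split.
        by move=> v Dv; rewrite asboolT.
      move=> i Hi; rewrite /solves -(y2 i Hi); apply: big_In => p Hp.
      case: (asboolP (Ds p.2)) => // Dp.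
      have Dsp := Hs _ (In_vars Hi Hp) Dp.
      by rewrite -(Has p.2 s As Dsp) (y1 _ Dsp).
    have [x Hx] := Hfin F; exists x; split => // v [s [As _]].
    by exfalso; apply: nA; exists s.
  exists (exist _ (Ds, as_) Vu) => s As; apply/asboolP => v Dsv /=.
  split; first by exists s.
  by rewrite (Has v s As Dsv).
case: t tmax => [[D a] Va] tmax /=.
have Dall : forall j, D j.
  move=> j; case: (pselect (D j)) => // nDj.
  have [c Hc] := @extend _ _ M I J eqs rhs D a j Va nDj.
  have := tmax (exist _ (_, _) Hc).
  have -> : Rl (exist _ (D, a) Va) (exist _ (_, _) Hc).
    apply/asboolP => v /= Dv; split; first by left.
    rewrite asboolF // => e; apply: nDj; by rewrite -e.
  move=> /(_ isT) /asboolP /(_ j) /=.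
  by case=> //; right.
exists a => i.
have [y [y1 y2]] := Va [:: i].
have ya : y = a by apply: functional_extensionality_dep => v; apply: y1.
by rewrite -ya; apply: y2; left.
Qed.
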